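(* Let $\ast$ be a continuous $t$-norm and let $\{(X_n,M_n,\ast)\}_{n\in\mathbb N}$ be a sequence of nonempty compact fuzzy metric spaces such that: (1) $\ast$ satisfies (TN1) and each $(M_n,\ast)$ is stationary; (2) there is a constant $C>0$ with $C\le\mathrm{diam}(X_n)$ for all $n$; (3) for every $0<\varepsilon<1$ there is $N(\varepsilon)\in\mathbb N$ with $\mathrm{Cov}(X_n,\varepsilon)\le N(\varepsilon)$ for all $n$. Then for every $0<\varepsilon<1$ there is a subsequence $\{X_{n_k}\}_k$ with $M_{GH}(X_{n_j},X_{n_k},t)>(1-\varepsilon)\ast(1-\varepsilon)$ for all $j,k\in\mathbb N$ and all $t>0$; consequently $\{(X_n,M_n,\ast)\}_n$ has a Cauchy subsequence with respect to $M_{GH}$.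
   Context: A continuous $t$-norm is a binary operation $\ast:[0,1]\times[0,1]\to[0,1]$ which is associative, commutative, continuous, satisfies $a\ast 1=a$, and is monotone. Property (TN1): $a-a\ast b\ge a\ast(1-b)$ for all $a,b\in[0,1]$. A fuzzy metric space $(X,M,\ast)$: $M:X\times X\times[0,\infty)\to[0,1]$ with, for all $x,y,z$ and $t,s>0$: (KM1) $M(x,y,0)=0$; (KM2) $M(x,y,t)=1$ for all $t>0$ iff $x=y$; (KM3) symmetry; (KM4) $M(x,y,t)\ast M(y,z,s)\le M(x,z,t+s)$; (KM5) $M(x,y,\cdot)$ left continuous on $[0,\infty)$. Non-Archimedean: $M(x,z,\max\{t,s\})\ge M(x,y,t)\ast M(y,z,s)$. $(M,\ast)$ is stationary if for each $x,y$ the function $t\mapsto M(x,y,t)$ is constant on $t>0$ (then we write $M(x,y)$); stationary fuzzy metrics are non-Archimedean. Balls $B(x,\varepsilon,t)=\{y:M(x,y,t)>1-\varepsilon\}$ generate the topology; ''compact'' refers to it. For stationary $M$, $\mathrm{diam}(X)=\inf\{M(x,y):x,y\in X\}$ and $\mathrm{Cov}(X,\varepsilon)$ is the minimal cardinality of $C\subseteq X$ with $X=\bigcup_{c\in C}\{y: M(c,y)>1-\varepsilon\}$. $H_M(A,B,t)=\min\{\inf_{a\in A}\sup_{b\in B}M(a,b,t),\ \inf_{b\in B}\sup_{a\in A}M(a,b,t)\}$. A fuzzy metric on the disjoint union $X\sqcup Y$ is admissible if it restricts to the given ones; $M_{GH}(X,Y,t)=\sup\{H_M(X,Y,t): M$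 admissible non-Archimedean fuzzy metric on $X\sqcup Y$ with $t$-norm $\ast\}$. A sequence is Cauchy w.r.t. $M_{GH}$ if for every $t>0$, $0<\varepsilon<1$ there is $n_0$ with $M_{GH}(X_n,X_m,t)>1-\varepsilon$ for all $n,m\ge n_0$. *)

(* Defs.v *)
From Stdlib Require List.
From mathcomp Require Import all_boot all_order all_algebra.
From mathcomp Require Import all_classical all_reals all_analysis.
Set Implicit Arguments. Unset Strict Implicit. Unset Printing Implicit Defensive.
Import Order.TTheory GRing.Theory Num.Theory.
Import numFieldNormedType.Exports.
Local Open Scope classical_set_scope.
Local Open Scope ring_scope.

Section FuzzyDefs.
Variable R : realType.

Definition unit_int (a : R) := 0 <= a <= 1.

Definition cont_tnorm (T : R -> R -> R) : Prop :=
  [/\ (forall a b, unit_int a -> unit_int b -> unit_int (T a b)),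
      ((forall a b c, unit_int a -> unit_int b -> unit_int c ->
          T a (T b c) = T (T a b) c) /\
      (forall a b, unit_int a -> unit_int b -> T a b = T b a)),
      (forall a, unit_int a -> T a 1 = a),
      (forall a b c d, unit_int a -> unit_int b -> unit_int c -> unit_int d ->
          a <= c -> b <= d -> T a b <= T c d) &
      {within [set p : (R * R)%type | unit_int p.1 /\ unit_int p.2],
         continuous (fun p : (R * R)%type => T p.1 p.2)} ].

Definition TN1 (T : R -> R -> R) : Prop :=
  forall a b, unit_int a -> unit_int b -> a - T a b >= T a (1 - b).

Definition fuzzy_metric (X : Type) (M : X -> X -> R -> R) (T : R -> R -> R) : Prop :=
  [/\ ((forall x y t, 0 <= t -> unit_int (M x y t)) /\
      (forall x y, M x y 0 = 0)),
      (forall x y, (forall t, 0 < t -> M x y t = 1) <-> x = y),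
      (forall x y t, 0 < t -> M x y t = M y x t),
      (forall x y z t s, 0 < t -> 0 < s -> T (M x y t) (M y z s) <= M x z (t + s)) &
      (forall x y t, 0 < t -> (fun s => M x y s) @ at_left t --> M x y t) ].

Definition non_archimedean (X : Type) (M : X -> X -> R -> R) (T : R -> R -> R) : Prop :=
  forall x y z t s, 0 < t -> 0 < s -> T (M x y t) (M y z s) <= M x z (Num.max t s).

Definition stationary (X : Type) (M : X -> X -> R -> R) : Prop :=
  forall x y t s, 0 < t -> 0 < s -> M x y t = M x y s.

Definition fball (X : Type) (M : X -> X -> R -> R) (x : X) (e t : R) : set X :=
  [set y | M x y t > 1 - e].

Definition fopen (X : Type) (M : X -> X -> R -> R) (U : set X) : Prop :=
  forall x, U x -> exists e t, 0 < e < 1 /\ 0 < t /\ fball M x e t `<=` U.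

Definition fcompact (X : Type) (M : X -> X -> R -> R) : Prop :=
  forall (I : Type) (U : I -> set X), (forall i, fopen M (U i)) ->
    setT `<=` \bigcup_i U i ->
    exists F : set I, finite_set F /\ setT `<=` \bigcup_(i in F) U i.

(* for stationary M, M(x,y) := M x y t for any t > 0 (we take t = 1) *)
Definition diam (X : Type) (M : X -> X -> R -> R) : R :=
  inf [set M x y 1 | x in [set: X] & y in [set: X]].

(* Cov(X, e): minimal cardinality of a covering set of centres
   (as an extended real, +oo if no finite covering exists) *)
Definition Cov (X : Type) (M : X -> X -> R -> R) (e : R) : \bar R :=
  ereal_inf [set ((size s)%:R)%:E | s in
     [set s : seq X | forall y, exists c, List.In c s /\ M c y 1 > 1 - e]].

(* Hausdorff fuzzy distance between the two halves of X ⊔ Y *)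
Definition H_M (X Y : Type) (M : (X + Y) -> (X + Y) -> R -> R) (t : R) : R :=
  Num.min (inf [set sup [set M (inl a) (inr b) t | b in [set: Y]] | a in [set: X]])
          (inf [set sup [set M (inl a) (inr b) t | a in [set: X]] | b in [set: Y]]).

Definition admissible (X Y : Type) (MX : X -> X -> R -> R) (MY : Y -> Y -> R -> R)
  (T : R -> R -> R) (M : (X + Y) -> (X + Y) -> R -> R) : Prop :=
  [/\ fuzzy_metric M T, non_archimedean M T,
      (forall a a' t, M (inl a) (inl a') t = MX a a' t) &
      (forall b b' t, M (inr b) (inr b') t = MY b b' t)].

Definition M_GH (X Y : Type) (MX : X -> X -> R -> R) (MY : Y -> Y -> R -> R)
  (T : R -> R -> R) (t : R) : R :=
  sup [set H_M M t | M in [set M | admissible MX MY T M]].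

Definition GH_cauchy (X : nat -> Type) (M : forall n, X n -> X n -> R -> R)
  (T : R -> R -> R) : Prop :=
  forall t e, 0 < t -> 0 < e < 1 ->
    exists n0, forall n m, (n0 <= n)%N -> (n0 <= m)%N ->
      M_GH (M n) (M m) T t > 1 - e.

End FuzzyDefs.

(* Main.v *)
Require Import Defs.
From mathcomp Require Import all_boot all_order all_algebra.
From mathcomp Require Import all_classical all_reals all_analysis.
From mathcomp Require Import lra.
Import Order.TTheory GRing.Theory Num.Theory.
Import numFieldNormedType.Exports.
Local Open Scope classical_set_scope.
Local Open Scope ring_scope.
Set Implicit Arguments. Unset Strict Implicit.

Lemma eps_delta (R : realType) (F : (R*R)%type -> R) (S : set (R*R)%type) :
  {within S, continuous F} -> forall p, S p -> forall e : R, 0 < e ->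
  exists2 d : R, 0 < d & forall q, S q -> `|p.1 - q.1| < d -> `|p.2 - q.2| < d ->
     `|F p - F q| < e.
Proof.
move=> H p Sp e e0.
have : F @ within S (nbhs p) --> F p.
  by rewrite (nbhs_subspace_in Sp); exact: H p.
move=> /cvgrPdist_lt/(_ e e0).
rewrite near_withinE => /nbhs_ballP[d d0 Hd]; exists d => // q Sq h1 h2.
by apply: Hd.
Qed.

Lemma sec_cont (R : realType) (F : (R*R)%type -> R) (S : set (R*R)%type) a :
  {within S, continuous F} -> (forall t, 0 <= t <= 1 -> S (a, t)) ->
  {within `[0, 1], continuous (fun t : R => F (a, t))}.
Proof.
move=> H HS; rewrite continuous_subspace_in => x; rewrite inE /= => xin.
have xin' : 0 <= x <= 1 by move: xin; rewrite in_itv.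
have h : (fun t : R => F (a, t)) @ within `[0, 1] (nbhs x) --> F (a, x).
  apply/cvgrPdist_lt => e e0.
  have [d d0 Hd] := eps_delta H (HS _ xin') e0.
  rewrite near_withinE; apply/nbhs_ballP; exists d => // t /= bt tin.
  apply: Hd => //=; first by apply: HS; move: tin; rewrite /= in_itv.
  by rewrite subrr normr0.
move: h; rewrite nbhs_subspace_in; first exact.
exact: xin.
Qed.

Section TAlg.
Variable R : realType.
Variable T : R -> R -> R.
Hypothesis tn : cont_tnorm T.
Implicit Types a b c d : R.

Lemma u0 : unit_int (0:R). Proof. by rewrite /unit_int lexx ler01. Qed.
Lemma u1 : unit_int (1:R). Proof. by rewrite /unit_int lexx ler01. Qed.
Lemma Tu a b : unit_int a -> unit_int b -> unit_int (T a b).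
Proof. by case: tn => h _ _ _ _; apply: h. Qed.
Lemma TA a b c : unit_int a -> unit_int b -> unit_int c -> T a (T b c) = T (T a b) c.
Proof. by case: tn => _ [h _] _ _ _; apply: h. Qed.
Lemma TC a b : unit_int a -> unit_int b -> T a b = T b a.
Proof. by case: tn => _ [_ h] _ _ _; apply: h. Qed.
Lemma T1 a : unit_int a -> T a 1 = a.
Proof. by case: tn => _ _ h _ _; apply: h. Qed.
Lemma T1l a : unit_int a -> T 1 a = a.
Proof. by move=> ha; rewrite TC ?T1 //; exact: u1. Qed.
Lemma Tm a b c d : unit_int a -> unit_int b -> unit_int c -> unit_int d ->
  a <= c -> b <= d -> T a b <= T c d.
Proof. by case: tn => _ _ _ h _; apply: h. Qed.
Lemma ulo a : unit_int a -> 0 <= a. Proof. by case/andP. Qed.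
Lemma uhi a : unit_int a -> a <= 1. Proof. by case/andP. Qed.
Lemma Tle_l a b : unit_int a -> unit_int b -> T a b <= a.
Proof.
move=> ha hb; rewrite -{2}(T1 ha); apply: Tm => //; [exact: u1|exact: uhi].
Qed.
Lemma Tle_r a b : unit_int a -> unit_int b -> T a b <= b.
Proof. by move=> ha hb; rewrite TC //; exact: Tle_l. Qed.
Lemma Tge0 a b : unit_int a -> unit_int b -> 0 <= T a b.
Proof. by move=> ha hb; apply: ulo; exact: Tu. Qed.
Lemma T0 a : unit_int a -> T a 0 = 0.
Proof. by move=> ha; apply/eqP; rewrite eq_le Tge0 ?Tle_r //; exact: u0. Qed.
Lemma Tml a b c : unit_int a -> unit_int b -> unit_int c -> a <= b -> T a c <= T b c.
Proof. by move=> *; apply: Tm. Qed.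
Lemma Tmr a b c : unit_int a -> unit_int b -> unit_int c -> b <= c -> T a b <= T a c.
Proof. by move=> *; apply: Tm. Qed.

End TAlg.

#[export] Hint Resolve @u0 @u1 @Tu : unitdb.

Section Pow.
Variable R : realType.
Variable T : R -> R -> R.
Hypothesis tn : cont_tnorm T.
Hypothesis tn1 : TN1 T.
Implicit Types a b c d : R.
Variable ww : R.
Hypothesis uww : unit_int ww.
Hypothesis ww1 : ww < 1.

Fixpoint pw (n : nat) : R := if n is n'.+1 then T ww (pw n') else 1.

Lemma pw_u n : unit_int (pw n).
Proof. elim: n => [|n IH] /=; [exact: u1|exact: Tu]. Qed.

Lemma pw_add k m : T (pw k) (pw m) = pw (k + m).
Proof.
elim: k => [|k IH] /=; first by rewrite T1l //; exact: pw_u.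
by rewrite -TA ?IH //; exact: pw_u.
Qed.

Lemma sqS : {within [set p : (R * R)%type | unit_int p.1 /\ unit_int p.2],
         continuous (fun p : (R * R)%type => T p.1 p.2)}.
Proof. by case: tn. Qed.

Lemma pw_small C : 0 < C -> exists n, pw n < C.
Proof.
move=> C0; case: (pselect (exists n, pw n < C)) => // hn; exfalso.
have hC n : C <= pw n by rewrite leNgt; apply/negP => h; apply: hn; exists n.
pose L := inf (range pw).
have rne : range pw !=set0 by exists (pw 0); exists 0%N.
have rlb : has_lbound (range pw) by exists 0 => _ [n _ <-]; exact: ulo (pw_u n).
have Lle n : L <= pw n by apply: ge_inf => //; exists n.
have CL : C <= L by apply: lb_le_inf => // _ [n _ <-].
have L0 : 0 < L by apply: lt_le_trans CL.
have uL : unit_int L by rewrite /unit_int (ltW L0) /= (le_trans (Lle 0%N)) //= lexx.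
have LL : T L L = L.
  apply/eqP; rewrite eq_le Tle_l //=.
  apply/ler_addgt0Pr => e e0.
  have [d d0 Hd] := eps_delta sqS (p := (L, L)) (conj uL uL) e0.
  have [_ [n _ <-] hn'] := inf_adherent d0 (conj rne rlb).
  have := Hd (pw n, pw n) (conj (pw_u n) (pw_u n)).
  have hd : `|L - pw n| < d.
    have := Lle n; rewrite ler0_norm ?subr_le0 ?Lle //; lra.
  move=> /(_ hd hd) /=; rewrite pw_add => h.
  have := Lle (n + n)%N => h2.
  move: h; rewrite ltr_norml => /andP[h3 _].
  lra.
have L1 : L < 1 by apply: le_lt_trans (Lle 1%N) _; rewrite /= T1 //.
have uL' : unit_int (1 - L) by rewrite /unit_int subr_ge0 (ltW L1) /= lerBlDr lerDl ltW.
have h0 : T L (1 - L) = 0.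
  apply/eqP; rewrite eq_le Tge0 // andbT.
  by have := tn1 uL uL; rewrite LL subrr.
have [hle|hlt] := leP L (1 - L).
  have : T L L <= T L (1 - L) by apply: Tmr.
  by rewrite LL h0 leNgt L0.
have [t tin Tt] : exists2 t, t \in `[0, 1] & T L t = 1 - L.
  apply: IVT => //.
    by apply: (@sec_cont R (fun p : (R * R)%type => T p.1 p.2) _ L sqS) => t ht; split.
  rewrite T1 // T0 //.
  rewrite min_l ?(ltW L0) // max_r ?(ltW L0) //.
  by rewrite subr_ge0 (ltW L1) /= ltW.
have ut : unit_int t by move: tin; rewrite in_itv.
move: h0; rewrite -Tt TA // LL Tt => /eqP; rewrite subr_eq0 => /eqP h1.
by move: L1; rewrite -h1 ltxx.
Qed.

End Pow.

Lemma TAC1 (R : realType) (T : R -> R -> R) (tn : cont_tnorm T) (a b c d : R) :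
  unit_int a -> unit_int b -> unit_int c -> unit_int d ->
  T (T a b) (T c d) = T (T a c) (T b d).
Proof.
move=> ha hb hc hd.
rewrite -TA ?Tu // (TA tn hb) // (TC tn hb) // -(TA tn hc) // (TA tn ha) ?Tu //.
Qed.

Lemma TAC2 (R : realType) (T : R -> R -> R) (tn : cont_tnorm T) (x1 x2 w y1 y2 : R) :
  unit_int x1 -> unit_int x2 -> unit_int w -> unit_int y1 -> unit_int y2 ->
  T (T (T x1 w) y1) (T (T x2 w) y2) = T x1 (T (T (T w w) (T y1 y2)) x2).
Proof.
move=> h1 h2 hw k1 k2.
have u := Tu tn.
rewrite (TAC1 tn (a:=T x1 w) (b:=y1) (c:=T x2 w) (d:=y2)) ?u //.
rewrite (TAC1 tn (a:=x1) (b:=w) (c:=x2) (d:=w)) //.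
rewrite -(TA tn (a:=T x1 x2) (b:=T w w) (c:=T y1 y2)) ?u //.
rewrite -(TA tn (a:=x1) (b:=x2) (c:=T (T w w) (T y1 y2))) ?u //.
by rewrite (TC tn (a:=x2) (b:=T (T w w) (T y1 y2))) ?u.
Qed.

Section Glue.
Variable R : realType.
Variable T : R -> R -> R.
Hypothesis tn : cont_tnorm T.
Variables X Y : Type.
Variable mX : X -> X -> R.
Variable mY : Y -> Y -> R.
Hypothesis umX : forall a b, unit_int (mX a b).
Hypothesis umY : forall a b, unit_int (mY a b).
Hypothesis mX_sym : forall a b, mX a b = mX b a.
Hypothesis mY_sym : forall a b, mY a b = mY b a.
Hypothesis mX_tri : forall a b c, T (mX a b) (mX b c) <= mX a c.
Hypothesis mY_tri : forall a b c, T (mY a b) (mY b c) <= mY a c.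
Hypothesis mY_refl : forall a, mY a a = 1.
Variable N : nat.
Hypothesis N0 : (0 < N)%N.
Variable c : 'I_N -> X.
Variable d : 'I_N -> Y.
Variable w : R.
Hypothesis uw : unit_int w.
Hypothesis HA : forall i k, T (T w w) (mY (d i) (d k)) <= mX (c i) (c k).

Definition gF a b (i : 'I_N) := T (T (mX a (c i)) w) (mY (d i) b).
Definition cv a b := \big[Num.max/0]_(i < N) gF a b i.

Local Hint Resolve umX umY uw : unitdb.
Local Hint Extern 1 (unit_int (T _ _)) => (apply: Tu tn) : unitdb.
Ltac ua := by auto with unitdb.

Lemma gF_u a b i : unit_int (gF a b i). Proof. rewrite /gF; ua. Qed.
Local Hint Resolve gF_u : unitdb.

Lemma cv_arg a b : exists i, cv a b = gF a b i.
Proof.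
have h i : 0 <= gF a b i by apply: ulo; ua.
rewrite /cv; have [i _ ->] := @eq_bigmax _ _ _ 0 (Ordinal N0) xpredT (gF a b) erefl (fun i _ => h i).
by exists i.
Qed.

Lemma cv_ge a b i : gF a b i <= cv a b.
Proof. exact: le_bigmax. Qed.

Lemma cv_u a b : unit_int (cv a b).
Proof. by have [i ->] := cv_arg a b; ua. Qed.
Local Hint Resolve cv_u : unitdb.

Lemma cv_lew a b : cv a b <= w.
Proof.
have [i ->] := cv_arg a b; rewrite /gF.
apply: le_trans (Tle_l tn _ _) _; try ua.
apply: le_trans (Tle_r tn _ _) _; ua.
Qed.

Lemma tri_XXY a a' b : T (mX a a') (cv a' b) <= cv a b.
Proof.
have [i ->] := cv_arg a' b; apply: le_trans (cv_ge a b i); rewrite /gF.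
rewrite (TA tn (umX a a')); try ua.
rewrite (TA tn (umX a a')); try ua.
apply: Tml; try ua; apply: Tml; try ua; exact: mX_tri.
Qed.

Lemma tri_XYY a b b' : T (cv a b) (mY b b') <= cv a b'.
Proof.
have [i ->] := cv_arg a b; apply: le_trans (cv_ge a b' i); rewrite /gF.
rewrite -(TA tn); try ua.
apply: Tmr; try ua; exact: mY_tri.
Qed.

Lemma tri_XYX a a' b : T (cv a b) (cv a' b) <= mX a a'.
Proof.
have [i ->] := cv_arg a b; have [k ->] := cv_arg a' b; rewrite /gF.
set x1 := mX a (c i); set x2 := mX a' (c k); set y1 := mY (d i) b; set y2 := mY (d k) b.
have e1 := TAC2 tn (umX a (c i)) (umX a' (c k)) uw (umY (d i) b) (umY (d k) b).
rewrite e1; apply: le_trans (mX_tri a (c i) a'); apply: Tmr; try ua.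
apply: le_trans (mX_tri (c i) (c k) a'); rewrite /x2 (mX_sym a').
apply: Tml; try ua.
apply: le_trans (HA i k); apply: Tmr; try ua.
by rewrite /y2 (mY_sym (d k) b); apply: mY_tri.
Qed.

End Glue.

Section FM.
Variable R : realType.
Variable T : R -> R -> R.
Variable X : Type.
Variable M : X -> X -> R -> R.
Hypothesis fm : fuzzy_metric M T.
Hypothesis st : stationary M.

Lemma fm_u a b t : 0 <= t -> unit_int (M a b t).
Proof. by case: fm => [[h _]] _ _ _ _; apply: h. Qed.
Lemma fm_u1 a b : unit_int (M a b 1).
Proof. by apply: fm_u; exact: ler01. Qed.
Lemma fm_0 a b : M a b 0 = 0.
Proof. by case: fm => [[_ h]] _ _ _ _; apply: h. Qed.
Lemma fm_st a b t : 0 < t -> M a b t = M a b 1.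
Proof. by move=> t0; apply: st. Qed.
Lemma fm_sym a b : M a b 1 = M b a 1.
Proof. by case: fm => _ _ h _ _; apply: h. Qed.
Lemma fm_symt a b t : 0 < t -> M a b t = M b a t.
Proof. by case: fm => _ _ h _ _; apply: h. Qed.
Lemma fm_refl a : M a a 1 = 1.
Proof. by case: fm => _ h _ _ _; have [_ /(_ erefl)/(_ 1 ltr01)] := h a a. Qed.
Lemma fm_eq a b : M a b 1 = 1 -> a = b.
Proof.
case: fm => _ h _ _ _ e; apply/(h a b) => t t0; by rewrite fm_st.
Qed.
Lemma fm_tri a b c : T (M a b 1) (M b c 1) <= M a c 1.
Proof.
case: fm => _ _ _ h _; have := h a b c 1 1 ltr01 ltr01.
by rewrite (fm_st a c (t:=1+1)) // addr_gt0.
Qed.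
End FM.

Lemma gF_swap (R : realType) (T : R -> R -> R) (tn : cont_tnorm T) (X Y : Type)
  (mX : X -> X -> R) (mY : Y -> Y -> R) N (c : 'I_N -> X) (d : 'I_N -> Y) w a b i :
  (forall a b, unit_int (mX a b)) -> (forall a b, unit_int (mY a b)) ->
  (forall a b, mX a b = mX b a) -> (forall a b, mY a b = mY b a) -> unit_int w ->
  gF T mY mX d c w b a i = gF T mX mY c d w a b i.
Proof.
move=> uX uY sX sY uw; rewrite /gF sX sY.
rewrite (TC tn (a := T (mY (d i) b) w)) ?Tu //.
by rewrite (TC tn (a:= mY (d i) b)) // (TA tn).
Qed.

Lemma cv_swap (R : realType) (T : R -> R -> R) (tn : cont_tnorm T) (X Y : Type)
  (mX : X -> X -> R) (mY : Y -> Y -> R) N (c : 'I_N -> X) (d : 'I_N -> Y) w a b :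
  (forall a b, unit_int (mX a b)) -> (forall a b, unit_int (mY a b)) ->
  (forall a b, mX a b = mX b a) -> (forall a b, mY a b = mY b a) -> unit_int w ->
  cv T mY mX d c w b a = cv T mX mY c d w a b.
Proof.
move=> uX uY sX sY uw; rewrite /cv; apply: eq_bigr => i _; exact: gF_swap.
Qed.

Section Glue2.
Variable R : realType.
Variable T : R -> R -> R.
Hypothesis tn : cont_tnorm T.
Variables X Y : Type.
Variable MX : X -> X -> R -> R.
Variable MY : Y -> Y -> R -> R.
Hypothesis fX : fuzzy_metric MX T.
Hypothesis fY : fuzzy_metric MY T.
Hypothesis sX : stationary MX.
Hypothesis sY : stationary MY.
Variable N : nat.
Hypothesis N0 : (0 < N)%N.
Variable c : 'I_N -> X.
Variable d : 'I_N -> Y.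
Variable w : R.
Hypothesis uw : unit_int w.
Hypothesis w1 : w < 1.
Let mX a b := MX a b 1.
Let mY a b := MY a b 1.
Hypothesis HA : forall i k, T (T w w) (mY (d i) (d k)) <= mX (c i) (c k).
Hypothesis HB : forall i k, T (T w w) (mX (c i) (c k)) <= mY (d i) (d k).

Let umX a b : unit_int (mX a b) := fm_u1 fX a b.
Let umY a b : unit_int (mY a b) := fm_u1 fY a b.
Let smX a b : mX a b = mX b a := fm_sym fX a b.
Let smY a b : mY a b = mY b a := fm_sym fY a b.
Let tmX a b c : T (mX a b) (mX b c) <= mX a c := fm_tri fX sX a b c.
Let tmY a b c : T (mY a b) (mY b c) <= mY a c := fm_tri fY sY a b c.

Definition cvv a b := cv T mX mY c d w a b.

Definition gv (p q : X + Y) : R :=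
  match p, q with
  | inl a, inl a' => mX a a'
  | inr b, inr b' => mY b b'
  | inl a, inr b => cvv a b
  | inr b, inl a => cvv a b
  end.

Definition MM (p q : X + Y) (s : R) : R :=
  match p, q with
  | inl a, inl a' => MX a a' s
  | inr b, inr b' => MY b b' s
  | inl a, inr b => if 0 < s then cvv a b else 0
  | inr b, inl a => if 0 < s then cvv a b else 0
  end.

Lemma MM_pos p q s : 0 < s -> MM p q s = gv p q.
Proof.
move=> s0; case: p => [a|b]; case: q => [a'|b'] /=; rewrite ?s0 //.
  exact: fm_st.
exact: fm_st.
Qed.

Lemma cvv_u a b : unit_int (cvv a b).
Proof. by apply: cv_u. Qed.

Lemma gv_u p q : unit_int (gv p q).
Proof. by case: p => a; case: q => b /=; rewrite ?cvv_u. Qed.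

Lemma gv_tri p q r : T (gv p q) (gv q r) <= gv p r.
Proof.
case: p => [a|b]; case: q => [a'|b']; case: r => [a''|b''] /=.
- exact: tmX.
- exact: (tri_XXY tn).
- exact: (tri_XYX tn).
- exact: (tri_XYY tn).
- rewrite (TC tn) ?cvv_u // smX; exact: (tri_XXY tn).
- have h := tri_XYX tn (mX := mY) (mY := mX) (c := d) (d := c) umY umX smY smX tmY tmX N0 uw HB b b'' a'.
  rewrite [cv _ mY mX _ _ _ b a'](cv_swap tn) // [cv _ mY mX _ _ _ b'' a'](cv_swap tn) // in h.
- rewrite (TC tn) ?cvv_u // smY; exact: (tri_XYY tn).
- exact: tmY.
Qed.

Lemma cvv_lt1 a b : cvv a b < 1.
Proof. by apply: le_lt_trans w1; apply: (cv_lew tn). Qed.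

Lemma MM_adm : admissible MX MY T MM.
Proof.
split => //.
- split.
  + split.
      move=> p q t t0; case: p => [a|b]; case: q => [a'|b'] /=;
        [exact: (fm_u fX)| | |exact: (fm_u fY)]; by case: (0 < t); [exact: cvv_u|exact: (@u0 R)].
    move=> p q; case: p => [a|b]; case: q => [a'|b'] /=; rewrite ?ltxx //; first [exact: (fm_0 fX)|exact: (fm_0 fY)].
  + move=> p q; split.
      move=> h; have := h 1 ltr01; rewrite MM_pos //; clear h.
      case: p => [a|b]; case: q => [a'|b'] /=.
      * by move/(fm_eq fX) => ->.
      * by move=> e; have := cvv_lt1 a b'; rewrite e ltxx.
      * by move=> e; have := cvv_lt1 a' b; rewrite e ltxx.
      * by move/(fm_eq fY) => ->.
    move=> -> t t0; rewrite MM_pos //; case: q => a /=; [exact: (fm_refl fX)|exact: (fm_refl fY)].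
  + move=> p q t t0; rewrite !MM_pos //.
    by case: p => [a|b]; case: q => [a'|b'] /=.
  + move=> p q r t s t0 s0; rewrite !MM_pos ?addr_gt0 //; exact: gv_tri.
  + move=> p q t t0; apply: cvg_near_cst; have := nbhs_left_gt t0.
    by apply: filterS => s s0; rewrite !MM_pos.
- move=> p q r t s t0 s0; rewrite !MM_pos ?lt_max ?t0 //; exact: gv_tri.
Qed.

Lemma H_bound r t : 0 < t -> unit_int r ->
  (forall a, exists i, r <= mX a (c i)) -> (forall b, exists i, r <= mY (d i) b) ->
  inhabited X -> inhabited Y -> T r w <= H_M MM t.
Proof.
move=> t0 ur cX cY [x0] [y0]; rewrite /H_M le_min; apply/andP; split.
- apply: lb_le_inf.
    by exists (sup [set MM (inl x0) (inr b) t | b in [set: Y]]); exists x0.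
  move=> _ [a _ <-]; have [i hi] := cX a.
  apply: (@le_trans _ _ (MM (inl a) (inr (d i)) t)).
    rewrite MM_pos //=; apply: le_trans (cv_ge _ _ _ _ _ _ _ _ i).
    rewrite /gF /mY (fm_refl fY) T1 ?Tu //; apply: Tml => //; exact: umX.
  apply: sup_upper_bound; last by exists (d i).
  split; first by exists (MM (inl a) (inr (d i)) t); exists (d i).
  by exists 1 => _ [b _ <-]; rewrite MM_pos //; apply: uhi; exact: gv_u (inl a) (inr b).
- apply: lb_le_inf.
    by exists (sup [set MM (inl a) (inr y0) t | a in [set: X]]); exists y0.
  move=> _ [b _ <-]; have [i hi] := cY b.
  apply: (@le_trans _ _ (MM (inl (c i)) (inr b) t)).
    rewrite MM_pos //=; apply: le_trans (cv_ge _ _ _ _ _ _ _ _ i).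
    rewrite /gF /mX (fm_refl fX) T1l // (TC tn) //; apply: (Tmr tn) => //; exact: umY.
  apply: sup_upper_bound; last by exists (c i).
  split; first by exists (MM (inl (c i)) (inr b) t); exists (c i).
  by exists 1 => _ [a _ <-]; rewrite MM_pos //; apply: uhi; exact: gv_u (inl a) (inr b).
Qed.

End Glue2.

Lemma MGH_ge (R : realType) (T : R -> R -> R) (X Y : Type) (MX : X -> X -> R -> R)
  (MY : Y -> Y -> R -> R) (M : X + Y -> X + Y -> R -> R) t :
  0 < t -> admissible MX MY T M -> inhabited X -> inhabited Y ->
  H_M M t <= M_GH MX MY T t.
Proof.
move=> t0 adm [x0] [y0]; apply: sup_upper_bound; last by exists M.
split; first by exists (H_M M t); exists M.
exists 1 => _ [M' [fm' _ _ _] <-].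
rewrite /H_M ge_min; apply/orP; left.
set A := [set _ | a in _].
have [lb|nlb] := pselect (has_lbound A); last by rewrite inf_out ?ler01 // => -[_ /nlb].
apply: le_trans (ge_inf lb (_ : A (sup [set M' (inl x0) (inr b) t | b in [set: Y]]))) _.
  by exists x0.
apply: ge_sup; first by exists (M' (inl x0) (inr y0) t); exists y0.
move=> _ [b _ <-]; apply: uhi; apply: (fm_u fm'); exact: ltW.
Qed.

Lemma inP_nth (X : Type) (x0 x : X) (s : seq X) :
  List.In x s -> exists i, (i < size s)%N /\ nth x0 s i = x.
Proof.
elim: s => [|y s IH] //= [->|h]; first by exists 0%N.
by have [i [hi e]] := IH h; exists i.+1.
Qed.

Lemma pigeon (S : finType) (f : nat -> S) :
  exists s, forall n, exists m, (n <= m)%N /\ f m = s.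
Proof.
case: (pselect (exists s, forall n, exists m, (n <= m)%N /\ f m = s)) => // hn.
exfalso.
have hb s : exists n, forall m, (n <= m)%N -> f m != s.
  case: (pselect (exists n, forall m, (n <= m)%N -> f m != s)) => // h'.
  exfalso; apply: hn; exists s => n.
  case: (pselect (exists m, (n <= m)%N /\ f m = s)) => // h2; exfalso; apply: h'.
  exists n => m nm; apply/eqP => e; apply: h2; by exists m.
pose B s := projT1 (cid (hb s)).
pose K := (\max_(s : S) B s)%N.
have := projT2 (cid (hb (f K))) K.
by rewrite -/(B (f K)) leq_bigmax eqxx => /(_ isT).
Qed.

Lemma enum_inf (P : nat -> Prop) : (forall n, exists m, (n <= m)%N /\ P m) ->
  exists phi : nat -> nat, (forall k, (phi k < phi k.+1)%N) /\ forall k, P (phi k).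
Proof.
move=> H; pose g n := projT1 (cid (H n)).
have hg n : (n <= g n)%N /\ P (g n) := projT2 (cid (H n)).
pose fix phi k := if k is k'.+1 then g (phi k').+1 else g 0%N.
exists phi; split => [k|[|k]] /=; last by case: (hg (phi k).+1).
  by case: (hg (phi k).+1).
by case: (hg 0%N).
Qed.

Lemma delta_ex (R : realType) (T : R -> R -> R) (tn : cont_tnorm T) (e : R) :
  0 < e -> exists2 dl : R, 0 < dl < 1 & 1 - e < T (1 - dl) (1 - dl).
Proof.
move=> e0.
have [d d0 Hd] := eps_delta (sqS tn) (p := (1, 1)) (conj (u1 R) (u1 R)) e0.
pose dl := Num.min (d / 2) (2^-1).
have dl0 : 0 < dl by rewrite lt_min divr_gt0 //= invr_gt0.
have dl2 : dl <= 2^-1 by rewrite ge_min lexx orbT.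
have dld : dl < d by apply: le_lt_trans (_ : dl <= d / 2) _; rewrite ?ge_min ?lexx //; lra.
have u : unit_int (1 - dl) by rewrite /unit_int; apply/andP; split; lra.
exists dl; first by apply/andP; split => //; lra.
have := Hd (1 - dl, 1 - dl) (conj u u) => /=.
have hn : `|1 - (1 - dl)| < d by rewrite opprB addrC subrK ger0_norm ?ltW.
move=> /(_ hn hn); rewrite T1 ?u1 // ltr_norml => /andP[_ h]; lra.
Qed.

Lemma diam_le (R : realType) (T : R -> R -> R) (X : Type) (M : X -> X -> R -> R) x y :
  fuzzy_metric M T -> diam M <= M x y 1.
Proof.
move=> fm; apply: ge_inf; last by exists x => //; exists y.
exists 0 => _ [a _ [b _ <-]]; apply: ulo; exact: (fm_u1 fm).
Qed.

Lemma core (R : realType) (T : R -> R -> R) (X : nat -> Type)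
  (M : forall n, X n -> X n -> R -> R) :
  cont_tnorm T -> TN1 T -> (forall n, inhabited (X n)) ->
  (forall n, fuzzy_metric (M n) T) -> (forall n, stationary (M n)) ->
  (exists C : R, 0 < C /\ forall n, C <= diam (M n)) ->
  (forall e : R, 0 < e < 1 -> exists N : nat,
      forall n, (Cov (M n) e <= (N%:R)%:E)%E) ->
  forall eps : R, 0 < eps -> exists phi : nat -> nat,
    (forall k, (phi k < phi k.+1)%N) /\
    forall j k t, 0 < t -> 1 - eps < M_GH (M (phi j)) (M (phi k)) T t.
Proof.
move=> tn tn1 inh fm st [C [C0 HC]] HCov eps eps0.
have [dl /andP[dl0 dl1] hdl] := delta_ex tn eps0.
pose w := 1 - dl.
have uw : unit_int w by rewrite /unit_int /w; apply/andP; split; lra.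
have w1 : w < 1 by rewrite /w; lra.
pose ww := T w w.
have uww : unit_int ww := Tu tn uw uw.
have ww1 : ww < 1 := le_lt_trans (Tle_l tn uw uw) w1.
have [n0 hn0] := pw_small tn tn1 uww ww1 C0.
have [N HN] := HCov dl (introT andP (conj dl0 dl1)).
have hnet : forall n, exists c : 'I_N -> X n, forall y, exists i, 1 - dl < M n (c i) y 1.
  move=> n; case: (inh n) => y0.
  have : (Cov (M n) dl < ((N.+1)%:R)%:E)%E.
    by apply: le_lt_trans (HN n) _; rewrite lte_fin ltr_nat.
  move=> /ereal_inf_lt[_ [s hs <-]]; rewrite lte_fin ltr_nat ltnS => hsN.
  exists (fun i => nth y0 s i) => y.
  have [c0 [inc hc]] := hs y; have [i [hi e]] := inP_nth y0 inc.
  have iN : (i < N)%N by apply: leq_trans hsN.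
  by exists (Ordinal iN) => /=; rewrite e.
have N0 : (0 < N)%N.
  case: (inh 0%N) => y0; have [cc hc] := hnet 0%N; have [i _] := hc y0.
  exact: (leq_ltn_trans (leq0n i) (ltn_ord i)).
pose cn n := projT1 (cid (hnet n)).
have hcn n y : exists i, 1 - dl < M n (cn n i) y 1 := projT2 (cid (hnet n)) y.
pose bk (u : R) := find (fun j => pw T ww j.+1 < u) (iota 0 n0.+1).
have pw_dec n : pw T ww n.+1 <= pw T ww n.
  by rewrite /=; apply: Tle_r => //; exact: pw_u.
have bkP u : C <= u -> u <= 1 ->
    [/\ (bk u < n0.+1)%N, pw T ww (bk u).+1 < u & u <= pw T ww (bk u)].
  move=> Cu u1.
  have hh : has (fun j => pw T ww j.+1 < u) (iota 0 n0.+1).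
    apply/hasP; exists n0; first by rewrite mem_iota add0n ltnSn.
    by apply: le_lt_trans (pw_dec n0) _; apply: lt_le_trans hn0 Cu.
  have hlt : (bk u < n0.+1)%N by rewrite -(size_iota 0 n0.+1) -has_find.
  split => //.
    by have := nth_find 0%N hh; rewrite nth_iota.
  case e: (bk u) => [|j] //.
  have := @before_find _ 0%N (fun j => pw T ww j.+1 < u) (iota 0 n0.+1) j.
  rewrite -/(bk u) e ltnSn nth_iota ?add0n; last by move: hlt; rewrite e; apply: ltnW.
  by move/(_ isT)/negbT; rewrite -leNgt.
pose col n : {ffun 'I_N * 'I_N -> 'I_n0.+1} :=
  [ffun p => inord (bk (M n (cn n p.1) (cn n p.2) 1))].
have [s hs] := pigeon col.
have [phi [phiI phiP]] := enum_inf hs.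
exists phi; split => // j k t t0.
have Cle n x y : C <= M n x y 1 := le_trans (HC n) (diam_le x y (fm n)).
have le1 n x y : M n x y 1 <= 1 := uhi (fm_u1 (fm n) x y).
have HAB n m i i' : col n = col m ->
    T ww (M m (cn m i) (cn m i') 1) <= M n (cn n i) (cn n i') 1.
  move=> ec; have e0 := congr1 (fun f : {ffun 'I_N * 'I_N -> 'I_n0.+1} => f (i, i')) ec.
  rewrite /= !ffunE in e0; have e1 := congr1 (@nat_of_ord _) e0; move: e1.
  have [b1 b2 b3] := bkP _ (Cle n (cn n i) (cn n i')) (le1 n (cn n i) (cn n i')).
  have [b1' b2' b3'] := bkP _ (Cle m (cn m i) (cn m i')) (le1 m (cn m i) (cn m i')).
  rewrite /= !inordK // => e.
  apply: le_trans (ltW b2); rewrite e /=.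
  by apply: Tmr => //; [exact: (fm_u1 (fm m))|exact: pw_u].
have cj : col (phi j) = s := phiP j.
have ck : col (phi k) = s := phiP k.
have adm := MM_adm tn (fm (phi j)) (fm (phi k)) (st (phi j)) (st (phi k)) N0
  (c := cn (phi j)) (d := cn (phi k)) uw w1
  (fun i i' => HAB _ _ i i' (etrans cj (esym ck)))
  (fun i i' => HAB _ _ i i' (etrans ck (esym cj))).
apply: lt_le_trans hdl _; apply: le_trans (MGH_ge t0 adm (inh _) (inh _)).
apply: (H_bound tn (fm (phi j)) (fm (phi k)) (st (phi j)) (st (phi k)) N0) => //.
- move=> x; have [i hi] := hcn (phi j) x; exists i; rewrite (fm_sym (fm _)); exact: ltW.
- move=> y; have [i hi] := hcn (phi k) y; exists i; exact: ltW.
Qed.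

Lemma incr_lt (f : nat -> nat) : (forall k, (f k < f k.+1)%N) ->
  forall i i', (i < i')%N -> (f i < f i')%N.
Proof.
move=> h i i'; elim: i' => [//|i' IH]; rewrite ltnS leq_eqVlt => /orP[/eqP->//|].
by move/IH => /ltn_trans; apply.
Qed.

Lemma incr_ge (f : nat -> nat) : (forall k, (f k < f k.+1)%N) -> forall i, (i <= f i)%N.
Proof. by move=> h; elim=> [//|i IH]; apply: leq_ltn_trans IH (h i). Qed.

Unset Implicit Arguments.
Theorem mainTheorem10 (R : realType) (T : R -> R -> R)
  (X : nat -> Type) (M : forall n, X n -> X n -> R -> R) :
  cont_tnorm T ->
  (forall n, inhabited (X n)) ->
  (forall n, fuzzy_metric (M n) T) ->
  (forall n, fcompact (M n)) ->
  TN1 T ->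
  (forall n, stationary (M n)) ->
  (exists C : R, 0 < C /\ forall n, C <= diam (M n)) ->
  (forall e : R, 0 < e < 1 -> exists N : nat,
      forall n, (Cov (M n) e <= (N%:R)%:E)%E) ->
  (forall e : R, 0 < e < 1 -> exists phi : nat -> nat,
      (forall k, (phi k < phi k.+1)%N) /\
      forall j k t, 0 < t ->
        M_GH (M (phi j)) (M (phi k)) T t > T (1 - e) (1 - e))
  /\
  (exists phi : nat -> nat, (forall k, (phi k < phi k.+1)%N) /\
      GH_cauchy (fun k => M (phi k)) T).
Proof.
move=> tn inh fm _ tn1 st [C [C0 HC]] HCov.
have coreg : forall (g : nat -> nat) (eps : R), 0 < eps -> exists phi : nat -> nat,
    (forall k, (phi k < phi k.+1)%N) /\
    forall j k t, 0 < t -> 1 - eps < M_GH (M (g (phi j))) (M (g (phi k))) T t.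
  move=> g eps eps0.
  apply: (@core R T (fun n => X (g n)) (fun n => M (g n))) => //.
  - by exists C; split.
  - by move=> e he; have [N HN] := HCov e he; exists N.
split.
  move=> e /andP[e0 e1]; have [phi [phiI Hphi]] := coreg id e e0.
  exists phi; split => // j k t t0; apply: le_lt_trans (Hphi j k t t0).
  have ue : unit_int (1 - e) by rewrite /unit_int; apply/andP; split; lra.
  exact: Tle_l.
pose epsk (k : nat) : R := (k.+1%:R)^-1.
have epsk0 k : 0 < epsk k by rewrite /epsk invr_gt0 ltr0n.
pose pick g k := projT1 (cid (coreg g (epsk k) (epsk0 k))).
have pickP g k := projT2 (cid (coreg g (epsk k) (epsk0 k))).
pose fix psi k := if k is k'.+1 then (fun i => psi k' (pick (psi k') k' i)) else id.
have psiI k i : (psi k i < psi k i.+1)%N.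
  elim: k i => [//|k IH] i /=.
  apply: incr_lt => //; exact: (pickP (psi k) k).1.
pose D k := psi k k.
have psiD j n i : (j <= n)%N -> exists r, psi n i = psi j r.
  move=> jn; elim: n jn i => [|n IH]; first by rewrite leqn0 => /eqP -> i; exists i.
  rewrite leq_eqVlt => /orP[/eqP -> i|]; first by exists i.
  by rewrite ltnS => /IH h i /=; apply: h.
exists D; split.
  move=> k; rewrite /D /=; apply: incr_lt => //.
  by apply: leq_trans (incr_ge (pickP (psi k) k).1 k.+1).
move=> t e t0 /andP[e0 e1].
have [j hj] := @ltr_add_invr R 0 e e0; rewrite add0r in hj.
exists j.+1 => n m jn jm.
have [r er] := psiD j.+1 n n jn; have [r' er'] := psiD j.+1 m m jm.
rewrite /D er er' /=.
apply: lt_trans ((pickP (psi j) j).2 r r' t t0).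
by rewrite /epsk ltrD2l ltrN2.
Qed.
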